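(* If $f,g\in\mathbb{F}_q[x_1,\dots,x_n]$ are $*$-equivalent polynomials, then $N^*(f)=N^*(g)$.
   Context: $\mathbb{F}_q$ is a finite field with $q$ elements. For $D=(d_1,\dots,d_n)\in\mathbb{Z}_{\ge0}^n$ write $X^D=x_1^{d_1}\cdots x_n^{d_n}$. For a polynomial $f=\sum_{j=1}^k a_jX^{D_j}$ with all $a_j\in\mathbb{F}_q^*$ (a constant term corresponds to $D_j=0$), its augmented degree matrix $\tilde D_f$ is the $(n+1)\times k$ integer matrix whose $j$-th column is $(1,D_j)^T$. Two polynomials $f=\sum_{j=1}^k a_jX^{D_j}$ and $g=\sum_{j=1}^k a_jX^{D'_j}$ in $\mathbb{F}_q[x_1,\dots,x_n]$ are called $*$-equivalent if they have the same coefficient vector $(a_1,\dots,a_k)$ and the congruences $\tilde D_f v^T\equiv0\pmod{q-1}$ and $\tilde D_g v^T\equiv0\pmod{q-1}$ (in unknowns $v=(v_1,\dots,v_k)$ with $0\le v_j\le q-2$) have the same set of solutions. $N^*(f)$ denotes the number of roots of $f$ in $(\mathbb{F}_q^* )^n$. *)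

(* Defs.v *)
From mathcomp Require Import all_boot all_order all_algebra all_field.
Set Implicit Arguments. Unset Strict Implicit. Unset Printing Implicit Defensive.
Import GRing.Theory.
Local Open Scope ring_scope.

(* A polynomial f = \sum_{j<k} a_j X^{D_j} in F[x_1..x_n] is represented by its
   coefficient vector a : 'I_k -> F and its exponent vectors D : 'I_k -> 'I_n -> nat
   (D j i = exponent of x_i in the j-th monomial). *)

Definition sparse_eval (F : fieldType) (n k : nat) (a : 'I_k -> F)
  (D : 'I_k -> 'I_n -> nat) (x : 'I_n -> F) : F :=
  \sum_(j < k) a j * \prod_(i < n) x i ^+ D j i.

Definition Nstar (F : finFieldType) (n k : nat) (a : 'I_k -> F)
  (D : 'I_k -> 'I_n -> nat) : nat :=
  #|[set x : {ffun 'I_n -> F} | [forall i, x i != 0] && (sparse_eval a D x == 0)]|.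

(* augmented degree matrix: (n+1) x k, j-th column (1, D_j)^T *)
Definition aug_deg (n k : nat) (D : 'I_k -> 'I_n -> nat) (r : 'I_n.+1) (j : 'I_k) : nat :=
  match unlift ord0 r with
  | None => 1%N
  | Some i => D j i
  end.

Definition aug_solutions (q n k : nat) (D : 'I_k -> 'I_n -> nat) :
  {set {ffun 'I_k -> 'I_q.-1}} :=
  [set v : {ffun 'I_k -> 'I_q.-1} |
     [forall r : 'I_n.+1, (\sum_(j < k) aug_deg D r j * v j == 0 %[mod q.-1])%N]].

(* *-equivalence of f = sum a_j X^{D_j} and g = sum a_j X^{D'_j} (same coefficient
   vector a, which is part of the data), with q = #|F| *)
Definition star_equiv (F : finFieldType) (n k : nat) (a : 'I_k -> F)
  (D D' : 'I_k -> 'I_n -> nat) : Prop :=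
  aug_solutions #|F| D = aug_solutions #|F| D'.

Definition distinct_exps (n k : nat) (D : 'I_k -> 'I_n -> nat) : Prop :=
  forall j1 j2 : 'I_k, (forall i, D j1 i = D j2 i) -> j1 = j2.

(* Main.v *)
Require Import Defs.
From mathcomp Require Import all_boot all_order all_algebra all_field.
From mathcomp Require Import ring.
From mathcomp Require cyclic.
Import GRing.Theory Num.Theory Order.TTheory.
Local Open Scope ring_scope.

Lemma dvd_mulmxl (m : int) (a b c : nat) (X : 'M[int]_(a,b)) (Y : 'M[int]_(b,c)) :
  (forall i j, (m %| X i j)%Z) -> forall i j, (m %| (X *m Y) i j)%Z.
Proof.
move=> H i j; rewrite mxE; apply: rpred_sum => l _; exact: dvdz_mulr.
Qed.

Lemma dvd_mulmxr (m : int) (a b c : nat) (X : 'M[int]_(a,b)) (Y : 'M[int]_(b,c)) :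
  (forall i j, (m %| Y i j)%Z) -> forall i j, (m %| (X *m Y) i j)%Z.
Proof.
move=> H i j; rewrite mxE; apply: rpred_sum => l _; exact: dvdz_mull.
Qed.

Lemma keyZ (p k : nat) (m : int) (M : 'M[int]_(p,k)) (t : 'rV[int]_k) : 0 < m ->
 (forall v : 'cV[int]_k, (forall r, (m %| (M *m v) r ord0)%Z) -> (m %| (t *m v) ord0 ord0)%Z) ->
 exists c : 'rV[int]_p, forall j, (m %| (t - c *m M) ord0 j)%Z.
Proof.
move=> m_gt0 H.
have m_neq0 : m != 0 by rewrite gt_eqF.
have [L uL [R uR [d _ defM]]] := int_Smith_normal_form M.
set Dl := \matrix_(i,j) _ in defM.
pose s := t *m invmx R.
pose del (i : 'I_k) := \sum_(r < p) Dl r i.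
have DlE r i : Dl r i = del i *+ (r == i :> nat).
  rewrite /del; case: eqP => ri; last by rewrite mulr0n /Dl mxE; case: eqP.
  rewrite mulr1n (bigD1 r) //= big1 ?addr0 // => r' ne.
  rewrite /Dl mxE; case: eqP => // ri'; case/negP: ne; apply/eqP/val_inj.
  by rewrite /= ri ri'.
pose g i := gcdz (del i) m.
have g_neq0 i : g i != 0 by rewrite gcdz_eq0 negb_and m_neq0 orbT.
have sdiv i : (g i %| s ord0 i)%Z.
  pose al := (m %/ g i)%Z.
  have mE : al * g i = m by rewrite divzK // dvdz_gcdr.
  have al_neq0 : al != 0 by apply: contra m_neq0 => /eqP a0; rewrite -mE a0 mul0r.
  pose w : 'cV[int]_k := al *: delta_mx i 0.
  have := H (invmx R *m w).
  have -> : M *m (invmx R *m w) = L *m (Dl *m w).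
    by rewrite defM !mulmxA mulmxK.
  have -> : t *m (invmx R *m w) = s *m w by rewrite mulmxA.
  have Dw r : (Dl *m w) r 0 = (del i * al) *+ (r == i :> nat).
    rewrite mxE (bigD1 i) //= big1 ?addr0.
      by rewrite (DlE r i) /w !mxE !eqxx mulr1 mulrnAl.
    by move=> j ne; rewrite /w !mxE (negbTE ne) /= mulr0n !mulr0.
  have sw : (s *m w) 0 0 = s 0 i * al.
    rewrite mxE (bigD1 i) //= big1 ?addr0.
      by rewrite /w !mxE !eqxx mulr1.
    by move=> j ne; rewrite /w !mxE (negbTE ne) /= mulr0n !mulr0.
  rewrite sw => H1.
  have : (m %| s ord0 i * al)%Z.
    apply: H1 => r0; apply: dvd_mulmxr => r c; rewrite ord1 Dw.
    case: (r == i :> nat); last by rewrite mulr0n dvdz0.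
    rewrite mulr1n /al mulz_divA ?dvdz_gcdr // -divz_mulAC ?dvdz_gcdl //.
    exact: dvdz_mull (dvdzz _).
  by rewrite -{1}mE (mulrC al) dvdz_mul2r.
pose y i := ((s ord0 i %/ g i)%Z * projT1 (Bezoutz (del i) m)).
have ydiv i : (m %| s ord0 i - y i * del i)%Z.
  have hs : s ord0 i = (s ord0 i %/ g i)%Z * g i by rewrite divzK.
  rewrite /y; case: (Bezoutz (del i) m) => u [v huv] /=.
  rewrite {1}hs /g; set Q := (_ %/ _)%Z; rewrite -huv.
  have -> : Q * (u * del i + v * m) - Q * u * del i = (Q * v) * m by ring.
  exact: dvdz_mull (dvdzz _).
pose e : 'rV[int]_p := \row_r \sum_(i < k | (i : nat) == r) y i.
have eDl j : (e *m Dl) 0 j = y j * del j.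
  rewrite mxE; case: (ltnP j p) => hj.
    rewrite (bigD1 (Ordinal hj)) //= big1 ?addr0.
      rewrite DlE eqxx mulr1n mxE (big_pred1 j) //.
    move=> r ne; rewrite DlE; case: eqP; last by rewrite mulr0n mulr0.
    by move=> rj; case/negP: ne; apply/eqP/val_inj.
  have -> : del j = 0.
    rewrite /del big1 // => r _; rewrite /Dl mxE; case: eqP => // rj.
    by move: (ltn_ord r); rewrite rj ltnNge hj.
  rewrite mulr0 big1 // => r _; rewrite DlE; case: eqP => [rj|]; last by rewrite mulr0n mulr0.
  by move: (ltn_ord r); rewrite rj ltnNge hj.
exists (e *m invmx L) => j.
have -> : t - e *m invmx L *m M = (s - e *m Dl) *m R.
  by rewrite defM !mulmxA mulmxKV // mulmxBl mulmxKV.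
apply: dvd_mulmxl => a b.
have -> : (s - e *m Dl) a b = s ord0 b - (e *m Dl) ord0 b by rewrite ord1 !mxE.
by rewrite eDl; apply: ydiv.
Qed.

Lemma Posz_sum (I : finType) (F : I -> nat) :
  Posz (\sum_i F i)%N = \sum_i Posz (F i).
Proof. exact: (big_morph Posz PoszD (erefl _)). Qed.

Lemma natmodZ (a b m : nat) : (a = b %[mod m])%N <-> (m%:Z %| a%:Z - b%:Z)%Z.
Proof.
rewrite -eqz_mod_dvd !modz_nat; split => [->//|/eqP [] //].
Qed.

Lemma modz_abs_eq (m : nat) (x : int) : (0 < m)%N ->
  ((`|(x %% m%:Z)%Z|%N)%:Z = (x %% m%:Z)%Z) /\ (m%:Z %| x - (`|(x %% m%:Z)%Z|%N)%:Z)%Z.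
Proof.
move=> m0; have mz : m%:Z != 0 by rewrite eqz_nat -lt0n.
have e : (`|(x %% m%:Z)%Z|%N)%:Z = (x %% m%:Z)%Z by rewrite gez0_abs // modz_ge0.
split=> //; rewrite e {1}(divz_eq x m) addrK; exact: dvdz_mull (dvdzz _).
Qed.

Lemma keyN (m p k : nat) (A : 'I_p -> 'I_k -> nat) (t : 'I_k -> nat) : (0 < m)%N ->
 (forall v : {ffun 'I_k -> 'I_m},
    (forall r, (\sum_j A r j * v j == 0 %[mod m])%N) -> (\sum_j t j * v j == 0 %[mod m])%N) ->
 exists c : 'I_p -> nat, forall j, (t j = \sum_r A r j * c r %[mod m])%N.
Proof.
move=> m0 H.
pose M : 'M[int]_(p,k) := \matrix_(r,j) (A r j)%:Z.
pose tz : 'rV[int]_k := \row_j (t j)%:Z.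
have hyp : forall v : 'cV[int]_k, (forall r, (m%:Z %| (M *m v) r ord0)%Z) -> (m%:Z %| (tz *m v) ord0 ord0)%Z.
  move=> v hv.
  pose nv j := `|(v j ord0 %% m%:Z)%Z|%N.
  have nvP j : (m%:Z %| v j ord0 - (nv j)%:Z)%Z by case: (modz_abs_eq m (v j ord0) m0).
  pose vn : {ffun 'I_k -> 'I_m} := [ffun j => Ordinal (ltn_pmod (nv j) m0)].
  have cong (f : 'I_k -> nat) : (m%:Z %| \sum_j (f j)%:Z * v j ord0 - (\sum_j f j * vn j)%N%:Z)%Z.
    rewrite Posz_sum -sumrB; apply: rpred_sum => j _.
    rewrite !ffunE /= PoszM -mulrBr; apply: dvdz_mull.
    have [e1 e2] := modz_abs_eq m (Posz (nv j)) m0.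
    rewrite (_ : Posz (nv j %% m)%N = (Posz (nv j) %% m%:Z)%Z); last by rewrite modz_nat.
    have -> : v j ord0 - (Posz (nv j) %% m%:Z)%Z =
      (v j ord0 - Posz (nv j)) + (Posz (nv j) - (Posz (nv j) %% m%:Z)%Z) by ring.
    apply: rpredD => //; rewrite -e1; exact: e2.
  have : (\sum_j t j * vn j == 0 %[mod m])%N.
    apply: H => r.
    have := cong (A r); have -> : \sum_j (A r j)%:Z * v j ord0 = (M *m v) r ord0.
      by rewrite mxE; apply: eq_bigr => j _; rewrite mxE.
    move=> h1; have := rpredB (hv r) h1; rewrite opprB addrC subrK.
    by rewrite mod0n.
  rewrite mod0n => h2.
  have := cong t; have -> : \sum_j (t j)%:Z * v j ord0 = (tz *m v) ord0 ord0.
    by rewrite mxE; apply: eq_bigr => j _; rewrite mxE.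
  have h2' : (m%:Z %| (\sum_j t j * vn j)%N%:Z)%Z by exact: h2.
  by move=> h1; have := rpredD h1 h2'; rewrite subrK.
have [c hc] := @keyZ p k m%:Z M tz (ltac:(by rewrite ltz_nat)) hyp.
pose cn r := `|(c ord0 r %% m%:Z)%Z|%N.
exists cn => j; apply/natmodZ.
have h := hc j; rewrite !mxE in h.
have -> : Posz (t j) - (\sum_r A r j * cn r)%N%:Z =
   (Posz (t j) - \sum_j0 c ord0 j0 * M j0 j) + (\sum_j0 c ord0 j0 * M j0 j - (\sum_r A r j * cn r)%N%:Z) by ring.
apply: rpredD => //.
rewrite Posz_sum -sumrB; apply: rpred_sum => r _.
rewrite mxE PoszM mulrC -mulrBr; apply: dvdz_mull.
by case: (modz_abs_eq m (c ord0 r) m0).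
Qed.
Lemma fiber_count (T U : finType) (P : {set T}) (Phi : T -> U) (Q : pred U) (K : nat) :
  (forall h, h \in Phi @: P -> #|[set pr in P | Phi pr == h]| = K) ->
  #|[set pr in P | Q (Phi pr)]| = (#|[set h in Phi @: P | Q h]| * K)%N.
Proof.
move=> HK.
rewrite -sum_nat_const -!sum1_card.
rewrite (partition_big Phi (fun h => h \in [set h in Phi @: P | Q h])) /=; last first.
  by move=> i; rewrite !inE => /andP [iP Qi]; rewrite imset_f.
apply: eq_bigr => h; rewrite inE => /andP [hP Qh].
rewrite -(HK h hP) -sum1_card; apply: eq_bigl => pr; rewrite !inE.
by apply/idP/idP => [/andP [/andP [-> _] ->] //| /andP [-> /eqP e]]; rewrite e Qh eqxx.
Qed.

Section FF.
Variables (F : finFieldType) (n k : nat) (a : 'I_k -> F).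
Definition Ptor : {set F * {ffun 'I_n -> F}} := [set pr : F * {ffun 'I_n -> F} | (pr.1 != 0) && [forall i, pr.2 i != 0]].
Definition Phi (D : 'I_k -> 'I_n -> nat) (pr : F * {ffun 'I_n -> F}) : {ffun 'I_k -> F} :=
  [ffun j => pr.1 * \prod_i pr.2 i ^+ D j i].
Definition Zr (h : {ffun 'I_k -> F}) := \sum_j a j * h j == 0.

Lemma count1 D : #|[set pr in Ptor | Zr (Phi D pr)]| = (#|F|.-1 * Nstar a D)%N.
Proof.
have -> : [set pr in Ptor | Zr (Phi D pr)] = setX [set~ (0:F)]
   [set x : {ffun 'I_n -> F} | [forall i, x i != 0] && (sparse_eval a D x == 0)].
  apply/setP => -[y x]; rewrite !inE /Zr /= /sparse_eval.
  under eq_bigr do rewrite ffunE /= mulrCA.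
  rewrite -mulr_sumr mulf_eq0.
  by case: (y =P 0).
by rewrite cardsX cardsC1.
Qed.

Lemma fiber_const D h : h \in Phi D @: Ptor ->
  #|[set pr in Ptor | Phi D pr == h]| = #|[set pr in Ptor | Phi D pr == Phi D (1, [ffun=> 1])]|.
Proof.
case/imsetP => p0 p0P ->.
move: (p0P); rewrite inE => /andP [y0 /forallP x0].
pose tau (pr : F * {ffun 'I_n -> F}) := (pr.1 / p0.1, [ffun i => pr.2 i / p0.2 i]).
pose sig (pr : F * {ffun 'I_n -> F}) := (pr.1 * p0.1, [ffun i => pr.2 i * p0.2 i]).
have tauK : cancel tau sig.
  move=> [y x]; rewrite /tau /sig /=; congr pair; first by rewrite divfK.
  by apply/ffunP=> i; rewrite !ffunE divfK.
have sigK : cancel sig tau.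
  move=> [y x]; rewrite /tau /sig /=; congr pair; first by rewrite mulfK.
  by apply/ffunP=> i; rewrite !ffunE mulfK.
have PhiM pr : Phi D (sig pr) = [ffun j => Phi D pr j * Phi D p0 j].
  apply/ffunP => j; rewrite !ffunE /=.
  under eq_bigr do rewrite ffunE exprMn.
  by rewrite big_split /= mulrACA.
have Phi1 : Phi D (1, [ffun=> 1]) = [ffun=> 1].
  by apply/ffunP => j; rewrite !ffunE big1 ?mul1r // => i _; rewrite ffunE expr1n.
have Phi0 j : Phi D p0 j != 0.
  rewrite ffunE mulf_neq0 //; apply/prodf_neq0 => i _; exact: expf_neq0.
have sigP pr : (sig pr \in Ptor) = (pr \in Ptor).
  case: pr => y x; rewrite !inE /= mulf_eq0 negb_or y0 andbT; congr (_ && _).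
  by apply: eq_forallb => i; rewrite ffunE mulf_eq0 negb_or x0 andbT.
apply/eqP; rewrite eqn_leq; apply/andP; split.
- rewrite -(card_imset _ (can_inj tauK)); apply: subset_leq_card.
  apply/subsetP => pr' /imsetP [pr]; rewrite inE => /andP [prP /eqP e] ->.
  rewrite inE -sigP tauK prP /= Phi1; apply/eqP/ffunP => j.
  have := congr1 (fun f : {ffun 'I_k -> F} => f j) (PhiM (tau pr)).
  rewrite tauK e [X in _ = X]ffunE => hh.
  by apply: (mulIf (Phi0 j)); rewrite [X in _ = X * _]ffunE mul1r -hh.
- rewrite -(card_imset _ (can_inj sigK)); apply: subset_leq_card.
  apply/subsetP => pr' /imsetP [pr]; rewrite inE => /andP [prP /eqP e] ->.
  rewrite inE sigP prP /= PhiM e Phi1; apply/eqP/ffunP => j.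
  by rewrite !ffunE mul1r.
Qed.

Lemma count2 D : (#|F|.-1 * Nstar a D * #|Phi D @: Ptor|)%N =
   (#|[set h in Phi D @: Ptor | Zr h]| * #|Ptor|)%N.
Proof.
have e1 := @fiber_count _ _ Ptor (Phi D) Zr _ (@fiber_const D).
have e2 := @fiber_count _ _ Ptor (Phi D) predT _ (@fiber_const D).
have eP : [set pr in Ptor | predT (Phi D pr)] = Ptor by apply/setP => x; rewrite !inE andbT.
have eH : [set h in Phi D @: Ptor | predT h] = Phi D @: Ptor by apply/setP => x; rewrite !inE andbT.
rewrite eP eH in e2; rewrite -count1 e1 e2.
by rewrite mulnAC mulnA.
Qed.

End FF.
Arguments Ptor {F n}.
Arguments Phi {F n k}.
Arguments Zr {F k}.
Arguments count2 {F n k}.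

Section Zpart.
Variables (F : finFieldType) (n k : nat) (z : F).
Hypothesis hz : (#|F|.-1).-primitive_root z.

Lemma card_pos : (0 < #|F|.-1)%N.
Proof. by rewrite -ltnS prednK ?card_finNzRing_gt1 // ltnW // card_finNzRing_gt1. Qed.

Lemma unit_pow {u : F} : u != 0 -> u ^+ #|F|.-1 = 1.
Proof.
move=> un; have := expf_card u.
rewrite -{1}(prednK (ltnW (card_finNzRing_gt1 F))) exprS => h.
by apply: (mulfI un); rewrite mulr1.
Qed.

Definition elog (u : F) : nat := oapp val 0%N [pick e : 'I_#|F|.-1 | z ^+ e == u].

Lemma elogK u : u != 0 -> z ^+ elog u = u.
Proof.
move=> un; have [i ei] := prim_rootP hz (unit_pow un).
rewrite /elog; case: pickP => [e /eqP //| none].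
by have := none i; rewrite ei eqxx.
Qed.

Lemma PhiE (D : 'I_k -> 'I_n -> nat) (c : 'I_n.+1 -> nat) :
  Phi D (z ^+ c ord0, [ffun i => z ^+ c (lift ord0 i)]) =
  [ffun j => z ^+ (\sum_r aug_deg D r j * c r)%N].
Proof.
apply/ffunP=> j; rewrite !ffunE big_ord_recl /= /aug_deg unlift_none mul1n exprD.
congr (_ * _); rewrite expr_sum; apply: eq_bigr => i _.
by rewrite ffunE liftK -exprM mulnC.
Qed.

Lemma reach (D D' : 'I_k -> 'I_n -> nat) :
  aug_solutions #|F| D = aug_solutions #|F| D' -> Phi D @: Ptor (F:=F) (n:=n) \subset Phi D' @: Ptor (F:=F) (n:=n).
Proof.
move=> eqS; apply/subsetP => h /imsetP [[y x] pin ->].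
move: pin; rewrite inE /= => /andP [yn /forallP xn].
pose c (r : 'I_n.+1) := match unlift ord0 r with None => elog y | Some i => elog (x i) end.
have e : (y, x) = (z ^+ c ord0, [ffun i => z ^+ c (lift ord0 i)]).
  congr pair; first by rewrite /c unlift_none elogK.
  by apply/ffunP => i; rewrite ffunE /c liftK elogK.
rewrite e PhiE.
case: (@keyN #|F|.-1 n.+1 k (aug_deg D') (fun j => \sum_r aug_deg D r j * c r)%N card_pos) => [v hv|c' hc'].
  have : v \in aug_solutions #|F| D' by rewrite inE; apply/forallP.
  rewrite -eqS inE => /forallP hv2.
  rewrite mod0n.
  have -> : (\sum_j (\sum_r aug_deg D r j * c r) * v j = \sum_r c r * \sum_j aug_deg D r j * v j)%N.
    under eq_bigr do rewrite big_distrl.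
    rewrite exchange_big; apply: eq_bigr => r _; rewrite big_distrr; apply: eq_bigr => j _.
    by rewrite /= mulnAC mulnC.
  apply: dvdn_sum => r _; apply: dvdn_mull.
  by have := hv2 r; rewrite mod0n.
have z0 : z != 0 by rewrite (prim_root_eq0 hz) -lt0n card_pos.
apply/imsetP; exists (z ^+ c' ord0, [ffun i => z ^+ c' (lift ord0 i)]).
  rewrite inE /= expf_neq0 //=; apply/forallP => i; rewrite ffunE expf_neq0 //.
rewrite PhiE; apply/ffunP => j; rewrite !ffunE; apply/eqP.
by rewrite (eq_prim_root_expr hz); apply/eqP; exact: hc'.
Qed.

End Zpart.

Theorem mainTheorem6 (F : finFieldType) (n k : nat) (a : 'I_k -> F)
  (D D' : 'I_k -> 'I_n -> nat) :
  (forall j, a j != 0) ->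
  distinct_exps D -> distinct_exps D' ->
  star_equiv a D D' ->
  Nstar a D = Nstar a D'.
Proof.
move=> _ _ _ eqS.
have /hasP [z _ hz] : has (#|F|.-1).-primitive_root (enum [set~ (0:F)]).
  apply: cyclic.has_prim_root.
  - exact: card_pos.
  - apply/allP => u; rewrite mem_enum inE => un.
    by rewrite unity_rootE unit_pow //; move: un; rewrite inE.
  - exact: enum_uniq.
  - by rewrite -cardE cardsC1.
have HE : Phi D @: Ptor (F:=F) (n:=n) = Phi D' @: Ptor (F:=F) (n:=n).
  by apply/eqP; rewrite eqEsubset (@reach F n k z hz D D' eqS) (@reach F n k z hz D' D (esym eqS)).
have e1 := count2 a D; have e2 := count2 a D'.
rewrite HE -e2 in e1.
have Hpos : (0 < #|F|.-1 * #|Phi D' @: Ptor (F:=F) (n:=n)|)%N.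
  rewrite muln_gt0 card_pos card_gt0; apply/set0Pn.
  exists (Phi D' (1, [ffun=> 1])); apply: imset_f.
  by rewrite inE /= oner_neq0; apply/forallP => i; rewrite ffunE oner_neq0.
by apply/eqP; rewrite -(eqn_pmul2r Hpos) !mulnA (mulnC (Nstar a D)) (mulnC (Nstar a D')) e1.
Qed.
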